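(* Let $p>q\ge 0$ be integers and let $P$, $Q$ be orthogonal projections on an $N$-dimensional real inner product space with ranks $p$ and $q$ respectively. Then there exist orthogonal projections $P'$ and $Q'$ of ranks $p-1$ and $q+1$ respectively such that $P+Q=P'+Q'$. *)

(* Defs.v *)
From HB Require Import structures.
From mathcomp Require Import all_boot all_order all_algebra.
From mathcomp Require Import reals.
Set Implicit Arguments. Unset Strict Implicit. Unset Printing Implicit Defensive.
Import Order.TTheory GRing.Theory Num.Theory.
Local Open Scope ring_scope.

(* An N-dimensional real inner product space is modelled (up to isometry) as
   R^N with the standard inner product, so linear operators are N x N real
   matrices and the adjoint is the transpose. *)
Definition orth_proj (R : realType) (N : nat) (P : 'M[R]_N) : Prop :=
  P *m P = P /\ P^T = P.

(* Main.v *)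
Require Import Defs.
From HB Require Import structures.
From mathcomp Require Import all_boot all_order all_algebra.
From mathcomp Require Import reals.
From mathcomp Require Import zify.
Import Order.TTheory GRing.Theory Num.Theory.
Local Open Scope ring_scope.

Lemma rank_orth_sum (F : fieldType) n (A B : 'M[F]_n) :
  A *m A = A -> B *m B = B -> A *m B = 0 -> B *m A = 0 ->
  \rank (A + B)%R = (\rank A + \rank B)%N.
Proof.
move=> AA BB AB BA.
have eA : A *m (A + B) = A by rewrite mulmxDr AA AB addr0.
have eB : B *m (A + B) = B by rewrite mulmxDr BB BA add0r.
have sA : (A <= (A + B)%R)%MS by rewrite -{1}eA submxMl.
have sB : (B <= (A + B)%R)%MS by rewrite -{1}eB submxMl.
have -> : \rank (A + B)%R = \rank (A + B)%MS.
  apply/eqP; rewrite eqn_leq; apply/andP; split; apply: mxrankS.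
    exact: addmx_sub_adds.
  by rewrite addsmx_sub sA sB.
have cap0 : (A :&: B)%MS = 0.
  have [D eD] := submxP (capmxSl A B).
  have [G eG] := submxP (capmxSr A B).
  have h1 : (A :&: B)%MS *m A = (A :&: B)%MS by rewrite {1}eD -mulmxA AA -eD.
  have h2 : (A :&: B)%MS *m A = 0 by rewrite eG -mulmxA BA mulmx0.
  by rewrite -h1 h2.
by rewrite -mxrank_sum_cap cap0 mxrank0 addn0.
Qed.

Theorem lemma2p4 (R : realType) (N p q : nat) (P Q : 'M[R]_N) :
  (q < p)%N ->
  orth_proj P -> \rank P = p ->
  orth_proj Q -> \rank Q = q ->
  exists P' Q' : 'M[R]_N,
    [/\ orth_proj P', \rank P' = p.-1, orth_proj Q', \rank Q' = q.+1
      & P + Q = P' + Q'].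
Proof.
move=> qp [PP Pt] rP [QQ Qt] rQ.
have cpos : (0 < \rank (P :&: kermx Q))%N.
  have := mxrank_sum_cap P (kermx Q); rewrite mxrank_ker rQ rP.
  have := rank_leq_col (P + kermx Q)%MS.
  have := rank_leq_col Q; rewrite rQ.
  lia.
set C := (P :&: kermx Q)%MS in cpos.
have [v vC vnz] : exists2 v : 'rV[R]_N, (v <= C)%MS & v != 0.
  by exists (nz_row C); rewrite ?nz_row_sub // nz_row_eq0 -mxrank_eq0 -lt0n.
have vP : v *m P = v.
  have [D eD] := submxP (submx_trans vC (capmxSl _ _)).
  by rewrite eD -mulmxA PP.
have vQ : v *m Q = 0.
  by apply/sub_kermxP; exact: submx_trans vC (capmxSr _ _).
have Pv : P *m v^T = v^T by rewrite -{1}Pt -trmx_mul vP.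
have Qv : Q *m v^T = 0 by rewrite -{1}Qt -trmx_mul vQ trmx0.
set s := (v *m v^T) 0 0.
have vv : v *m v^T = s%:M by rewrite [LHS]mx11_scalar.
have snz : s != 0.
  apply/eqP => s0; move/eqP: vnz; apply; apply/matrixP => i j.
  rewrite (ord1 i) mxE.
  have := (@psumr_eq0P R _ predT (fun k => v 0 k * v 0 k)).
  move=> /(_ (fun k _ => sqr_ge0 (v 0 k))) H'.
  have /H' : \sum_(k < N) v 0 k * v 0 k = 0.
    by rewrite -[RHS]s0 /s mxE; apply: eq_bigr => k _; rewrite mxE.
  by move=> /(_ j isT) /eqP; rewrite mulf_eq0 orbb => /eqP.
pose E := v^T *m (s^-1 *: v).
have w : (s^-1 *: v) *m v^T = 1%:M.
  by rewrite -scalemxAl vv scale_scalar_mx mulVf.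
have EE : E *m E = E by rewrite /E mulmxA -(mulmxA v^T) w mulmx1.
have PE : P *m E = E by rewrite /E mulmxA Pv.
have EP : E *m P = E by rewrite /E -mulmxA -scalemxAl vP.
have QE : Q *m E = 0 by rewrite /E mulmxA Qv mul0mx.
have EQ : E *m Q = 0 by rewrite /E -mulmxA -scalemxAl vQ scaler0 mulmx0.
have Et : E^T = E by rewrite /E trmx_mul trmxK linearZ /= -scalemxAl scalemxAr.
have vE : v *m E = v.
  by rewrite /E mulmxA vv mul_scalar_mx scalerA mulfV // scale1r.
have rE : \rank E = 1%N.
  apply/eqP; rewrite eqn_leq; apply/andP; split.
    exact: leq_trans (mxrankM_maxr _ _) (rank_leq_row _).
  rewrite lt0n mxrank_eq0; apply: contra vnz => /eqP E0.
  by rewrite -vE E0 mulmx0.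
exists (P - E), (Q + E); split.
- split; first by rewrite mulmxBl !mulmxBr PP PE EP EE subrr subr0.
  by rewrite raddfB /= Pt Et.
- have := @rank_orth_sum _ _ (P - E) E.
  rewrite subrK rP rE => -> //.
  + by rewrite addn1.
  + by rewrite mulmxBl !mulmxBr PP PE EP EE subrr subr0.
  + by rewrite mulmxBl PE EE subrr.
  + by rewrite mulmxBr EP EE subrr.
- split; first by rewrite mulmxDl !mulmxDr QQ QE EQ EE add0r addr0.
  by rewrite raddfD /= Qt Et.
- by rewrite rank_orth_sum // rQ rE addn1.
- by rewrite addrCA subrK addrC.
Qed.
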